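(* Let $u:[0,b)\to(0,\infty)$ be a solution of $\frac{u''}{1+(u')^2}=\frac{xu'}{2}-\frac u2+\frac{n-1}{u}$ with $u(0)<\sqrt{2(n-1)}$ and $u'(0)=0$. Then $u$ is strictly convex on $[0,b)$.
   Context: $n\ge2$ is a fixed integer. *)

(* Defs.v *)
From Stdlib Require Import Reals.
From Coquelicot Require Import Coquelicot.
Open Scope R_scope.

Definition in_I0b (b : Rbar) (x : R) : Prop := 0 <= x /\ Rbar_lt x b.

(* f' is the derivative of f on [0,b), computed within [0,b)
   (so at x = 0 this is the one-sided right derivative). *)
Definition deriv_on_I0b (b : Rbar) (f f' : R -> R) : Prop :=
  forall x, in_I0b b x ->
    filterlim (fun y => (f y - f x) / (y - x))
      (within (fun y => in_I0b b y /\ y <> x) (locally x))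
      (locally (f' x)).

Definition is_solution (n : nat) (b : Rbar) (u du ddu : R -> R) : Prop :=
  deriv_on_I0b b u du /\ deriv_on_I0b b du ddu /\
  forall x, in_I0b b x ->
    0 < u x /\
    ddu x / (1 + (du x)^2) = x * du x / 2 - u x / 2 + (INR n - 1) / u x.

Definition strictly_convex_on_I0b (b : Rbar) (u : R -> R) : Prop :=
  forall x y t, in_I0b b x -> in_I0b b y -> x < y -> 0 < t < 1 ->
    u (t * x + (1 - t) * y) < t * u x + (1 - t) * u y.

(* Main.v *)
Require Import Defs.
From Stdlib Require Import Reals Lra Psatz.
From Coquelicot Require Import Coquelicot.
Open Scope R_scope.


Definition Phi_ (r2 : R) (u du : R -> R) (t : R) := r2 - u t ^ 2 + t * u t * du t.
Definition Psi_ (r2 : R) (u du : R -> R) (t : R) :=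
  t * du t ^ 2 - u t * du t + t * (1 + du t ^ 2) * Phi_ r2 u du t / 2.

Lemma dPhi r2 u du ddu x : is_derive u x (du x) -> is_derive du x (ddu x) ->
  ddu x = (1 + du x ^ 2) * Phi_ r2 u du x / (2 * u x) -> u x <> 0 ->
  is_derive (Phi_ r2 u du) x (Psi_ r2 u du x).
Proof.
  intros H1 H2 H3 H4. unfold Phi_. auto_derive.
  - repeat split; eexists; eauto.
  - replace (Derive (fun x0 => u x0) x) with (du x) by (symmetry; apply is_derive_unique; exact H1).
    replace (Derive (fun x0 => du x0) x) with (ddu x) by (symmetry; apply is_derive_unique; exact H2).
    rewrite H3. unfold Psi_, Phi_. field. exact H4.
Qed.

Lemma dPsi r2 u du ddu x : is_derive u x (du x) -> is_derive du x (ddu x) ->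
  ddu x = (1 + du x ^ 2) * Phi_ r2 u du x / (2 * u x) -> u x <> 0 ->
  is_derive (Psi_ r2 u du) x
    (x * du x * ddu x * (2 + Phi_ r2 u du x) + x * (1 + du x ^ 2) * Psi_ r2 u du x / 2).
Proof.
  intros H1 H2 H3 H4. pose proof (dPhi r2 u du ddu x H1 H2 H3 H4) as H5.
  unfold Psi_. auto_derive.
  - repeat split; eexists; eauto.
  - replace (Derive (fun x0 => u x0) x) with (du x) by (symmetry; apply is_derive_unique; exact H1).
    replace (Derive (fun x0 => du x0) x) with (ddu x) by (symmetry; apply is_derive_unique; exact H2).
    replace (Derive (fun x0 => Phi_ r2 u du x0) x) with (Psi_ r2 u du x) by (symmetry; apply is_derive_unique; exact H5).
    unfold Psi_. rewrite H3. field. exact H4.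
Qed.

Lemma ballR x e y : ball x e y <-> Rabs (y - x) < e.
Proof. unfold ball; simpl; unfold AbsRing_ball, abs, minus, plus, opp; simpl. tauto. Qed.

Lemma deriv_eps b g g' x : deriv_on_I0b b g g' -> in_I0b b x ->
  forall eps, 0 < eps -> exists d, 0 < d /\ forall y, in_I0b b y -> y <> x -> Rabs (y - x) < d ->
   Rabs ((g y - g x) / (y - x) - g' x) < eps.
Proof.
  intros Hd Hx eps Heps. specialize (Hd x Hx).
  destruct (proj1 (filterlim_locally _ _) Hd (mkposreal eps Heps)) as [d Hd'].
  exists d. split. apply cond_pos. intros y Hy Hyx Hyd.
  specialize (Hd' y (proj2 (ballR _ _ _) Hyd) (conj Hy Hyx)).
  apply ballR in Hd'. exact Hd'.
Qed.

Lemma below_b (b : Rbar) (x : R) : Rbar_lt x b -> exists d, 0 < d /\ forall y, y < x + d -> Rbar_lt y b.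
Proof.
  destruct b as [b'| |]; intros H; simpl in H |- *.
  - exists (b' - x). split. lra. intros; lra.
  - exists 1. split. lra. auto.
  - destruct H.
Qed.

Lemma interior_derive b g g' x : deriv_on_I0b b g g' -> 0 < x -> Rbar_lt x b ->
  is_derive g x (g' x).
Proof.
  intros Hd Hx Hxb. apply is_derive_Reals. intros eps Heps.
  destruct (below_b b x Hxb) as [d1 [Hd1 Hb1]].
  destruct (deriv_eps b g g' x Hd (conj (Rlt_le _ _ Hx) Hxb) eps Heps) as [d2 [Hd2 H2]].
  assert (Hm : 0 < Rmin x (Rmin d1 d2)) by (repeat apply Rmin_pos; lra).
  exists (mkposreal _ Hm). intros h Hh0 Hh. simpl in Hh.
  pose proof (Rmin_l x (Rmin d1 d2)). pose proof (Rmin_r x (Rmin d1 d2)).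
  pose proof (Rmin_l d1 d2). pose proof (Rmin_r d1 d2).
  assert (Hy : in_I0b b (x + h)).
  { split. apply Rabs_def2 in Hh. lra. apply Hb1. apply Rabs_def2 in Hh. lra. }
  specialize (H2 (x + h) Hy).
  replace (x + h - x) with h in H2 by ring. apply H2. lra. lra.
Qed.

Definition RC (g : R -> R) (a : R) := exists h, continuity_pt h a /\ forall y, a <= y -> h y = g y.

Lemma D_cont (f : R -> R) (x l : R) : is_derive f x l -> continuity_pt f x.
Proof. intros H. apply derivable_continuous_pt. exists l. apply is_derive_Reals; exact H. Qed.

Lemma RC_of_derive (g : R -> R) (a l : R) : is_derive g a l -> RC g a.
Proof. intros H. exists g. split. eapply D_cont; eauto. auto. Qed.

Lemma RC_cont g a : continuity_pt g a -> RC g a.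
Proof. intros H. exists g. auto. Qed.

Lemma RC_ext f g a : (forall y, a <= y -> f y = g y) -> RC g a -> RC f a.
Proof. intros He [h [Hc Hh]]. exists h. split; auto. intros y Hy. rewrite He, Hh; auto. Qed.

Lemma RC_plus f g a : RC f a -> RC g a -> RC (fun t => f t + g t) a.
Proof. intros [h1 [C1 E1]] [h2 [C2 E2]]. exists (fun y => h1 y + h2 y). split.
  apply (continuity_pt_plus h1 h2); auto. intros y Hy; rewrite E1, E2; auto. Qed.
Lemma RC_minus f g a : RC f a -> RC g a -> RC (fun t => f t - g t) a.
Proof. intros [h1 [C1 E1]] [h2 [C2 E2]]. exists (fun y => h1 y - h2 y). split.
  apply (continuity_pt_minus h1 h2); auto. intros y Hy; rewrite E1, E2; auto. Qed.
Lemma RC_mult f g a : RC f a -> RC g a -> RC (fun t => f t * g t) a.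
Proof. intros [h1 [C1 E1]] [h2 [C2 E2]]. exists (fun y => h1 y * h2 y). split.
  apply (continuity_pt_mult h1 h2); auto. intros y Hy; rewrite E1, E2; auto. Qed.
Lemma RC_const c a : RC (fun _ => c) a.
Proof. apply RC_cont. apply continuity_pt_const. intros x y; reflexivity. Qed.
Lemma RC_id a : RC (fun t => t) a.
Proof. apply RC_cont. apply continuity_pt_id. Qed.

Lemma RC_at0 b g g' : deriv_on_I0b b g g' -> Rbar_lt 0 b -> RC g 0.
Proof.
  intros Hd Hb. exists (fun y => g (Rmax 0 y)). split.
  2:{ intros y Hy. rewrite Rmax_right; auto. }
  unfold continuity_pt, continue_in, limit1_in, limit_in. simpl. unfold R_dist.
  intros eps Heps.
  destruct (below_b b 0 Hb) as [d1 [Hd1 Hb1]].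
  destruct (deriv_eps b g g' 0 Hd (conj (Rle_refl 0) Hb) 1 Rlt_0_1) as [d2 [Hd2 H2]].
  set (M := Rabs (g' 0) + 1).
  assert (HM : 0 < M) by (unfold M; pose proof (Rabs_pos (g' 0)); lra).
  exists (Rmin (Rmin d1 d2) (eps / M)). split.
  { repeat apply Rmin_pos; try lra. apply Rdiv_lt_0_compat; lra. }
  intros y [[_ Hy0] Hy].
  pose proof (Rmin_l (Rmin d1 d2) (eps / M)). pose proof (Rmin_r (Rmin d1 d2) (eps / M)).
  pose proof (Rmin_l d1 d2). pose proof (Rmin_r d1 d2).
  rewrite (Rmax_left 0 0) by lra.
  destruct (Rle_or_lt y 0) as [Hyn | Hyp].
  - rewrite Rmax_left by lra. rewrite Rminus_diag, Rabs_R0. lra.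
  - rewrite Rmax_right by lra.
    rewrite Rminus_0_r, Rabs_right in Hy by lra.
    assert (Hyi : in_I0b b y) by (split; [lra | apply Hb1; lra]).
    specialize (H2 y Hyi ltac:(lra)). rewrite !Rminus_0_r in H2.
    assert (H2' : Rabs ((g y - g 0) / y - g' 0) < 1) by (apply H2; rewrite Rabs_right; lra). clear H2.
    set (q := (g y - g 0) / y) in H2'.
    assert (Hq : g y - g 0 = q * y) by (unfold q; field; lra).
    rewrite Hq, Rabs_mult, (Rabs_right y) by lra.
    assert (Rabs q < M).
    { unfold M. pose proof (Rabs_triang (q - g' 0) (g' 0)) as Ht. replace (q - g' 0 + g' 0) with q in Ht by ring. lra. }
    assert (Hy2 : y < eps / M) by lra.
    apply Rle_lt_trans with (M * y). apply Rmult_le_compat_r; lra.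
    apply (Rmult_lt_compat_l M) in Hy2; [|lra]. replace (M * (eps / M)) with eps in Hy2 by (field; lra). lra.
Qed.

Lemma ext_derive (g h : R -> R) a c l : (forall y, a <= y -> h y = g y) -> a < c ->
  is_derive g c l -> is_derive h c l.
Proof.
  intros He Hac Hd. apply (is_derive_ext_loc g h); auto.
  assert (Hp : 0 < c - a) by lra. exists (mkposreal _ Hp). intros y Hy.
  apply ballR in Hy. simpl in Hy. apply Rabs_def2 in Hy. unfold minus, plus, opp in Hy; simpl in Hy. symmetry. apply He. lra.
Qed.

Lemma mvt (g g' : R -> R) a c : a < c -> RC g a ->
  (forall x, a < x <= c -> is_derive g x (g' x)) ->
  exists xi, a < xi < c /\ g c - g a = g' xi * (c - a).
Proof.
  intros Hac [h [Hc He]] Hd.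
  assert (Dh : forall x, a < x <= c -> is_derive h x (g' x)).
  { intros x Hx. apply (ext_derive g h a x); [exact He | lra | apply Hd; exact Hx]. }
  assert (pr2 : forall x, a < x < c -> derivable_pt h x).
  { intros x Hx. exists (g' x). apply is_derive_Reals. apply Dh. lra. }
  assert (pr1 : forall x, a < x < c -> derivable_pt id x).
  { intros x Hx. apply derivable_pt_id. }
  destruct (MVT id h a c pr1 pr2 Hac) as [xi [P HP]].
  - intros; apply continuity_pt_id.
  - intros x Hx. destruct (Req_dec x a) as [-> | Hne]. exact Hc.
    apply (D_cont h x (g' x)). apply Dh. lra.
  - exists xi. split. exact P.
    assert (E1 : derive_pt id xi (pr1 xi P) = 1).
    { rewrite (pr_nu id xi (pr1 xi P) (derivable_pt_id xi)). apply derive_pt_id. }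
    assert (E2 : derive_pt h xi (pr2 xi P) = g' xi).
    { apply derive_pt_eq_0. apply is_derive_Reals. apply Dh. lra. }
    rewrite E1, E2 in HP. unfold id in HP. rewrite <- (He c), <- (He a) by lra. lra.
Qed.

Lemma cont_pos h a : continuity_pt h a -> 0 < h a -> exists d, 0 < d /\ forall y, Rabs (y - a) < d -> 0 < h y.
Proof.
  intros Hc Hp. unfold continuity_pt, continue_in, limit1_in, limit_in in Hc. simpl in Hc.
  destruct (Hc (h a) Hp) as [d [Hd H]]. exists d. split. lra.
  intros y Hy. destruct (Req_dec y a) as [-> | Hne]. auto.
  assert (Hdd : R_dist (h y) (h a) < h a). { apply H. split. split. exact I. auto. exact Hy. }
  unfold R_dist in Hdd. apply Rabs_def2 in Hdd. lra.
Qed.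

Lemma first_fail (g : R -> R) y : 0 < y -> RC g 0 -> (forall t, 0 < t <= y -> continuity_pt g t) ->
  0 < g 0 -> g y <= 0 -> exists z, 0 < z <= y /\ g z <= 0 /\ forall t, 0 <= t < z -> 0 < g t.
Proof.
  intros Hy [h [Hc He]] Hct Hg0 Hgy.
  rewrite <- (He 0) in Hg0 by lra.
  destruct (cont_pos h 0 Hc Hg0) as [d0 [Hd0 H0]].
  set (E := fun t => 0 <= t <= y /\ forall s, 0 <= s <= t -> 0 < g s).
  assert (HE0 : E 0). { split. lra. intros s Hs. replace s with 0 by lra. rewrite <- He by lra. auto. }
  assert (Hb : bound E). { exists y. intros t [Ht _]. lra. }
  destruct (completeness E Hb (ex_intro _ 0 HE0)) as [z [Hub Hlub]].
  assert (Ht0 : E (Rmin (d0/2) y)).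
  { pose proof (Rmin_l (d0/2) y). pose proof (Rmin_r (d0/2) y).
    assert (0 < Rmin (d0/2) y) by (apply Rmin_pos; lra).
    split. lra. intros s Hs. rewrite <- He by lra. apply H0. rewrite Rminus_0_r, Rabs_right; lra. }
  assert (Hz0 : 0 < z). { pose proof (Hub _ Ht0). assert (0 < Rmin (d0/2) y) by (apply Rmin_pos; lra). lra. }
  assert (Hzy : z <= y). { apply Hlub. intros t [Ht _]. lra. }
  assert (Hpos : forall t, 0 <= t < z -> 0 < g t).
  { intros t Ht. destruct (Rlt_or_le 0 (g t)) as [H | H]; auto. exfalso.
    assert (Hubt : is_upper_bound E t).
    { intros t' [Ht' Hs]. destruct (Rle_or_lt t' t); auto. exfalso.
      pose proof (Hs t ltac:(lra)). lra. }
    pose proof (Hlub t Hubt). lra. }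
  exists z. split. lra. split. 2: exact Hpos.
  destruct (Rle_or_lt (g z) 0) as [H | H]; auto. exfalso.
  destruct (cont_pos g z (Hct z ltac:(lra)) H) as [d1 [Hd1 H1]].
  destruct (Req_dec z y) as [-> | Hne]. lra.
  assert (Ht1 : E (Rmin (z + d1/2) y)).
  { pose proof (Rmin_l (z + d1/2) y). pose proof (Rmin_r (z + d1/2) y).
    assert (z < Rmin (z + d1/2) y) by (apply Rmin_glb_lt; lra).
    split. lra. intros s Hs. destruct (Rlt_or_le s z). apply Hpos; lra.
    apply H1. apply Rabs_def1; lra. }
  pose proof (Hub _ Ht1).
  assert (z < Rmin (z + d1/2) y) by (apply Rmin_glb_lt; lra). lra.
Qed.

Lemma deriv_pos_left (g : R -> R) m l : is_derive g m l -> 0 < l ->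
  exists d, 0 < d /\ forall t, m - d < t < m -> g t < g m.
Proof.
  intros Hd Hl. apply is_derive_Reals in Hd. destruct (Hd l Hl) as [d Hd'].
  exists d. split. apply cond_pos. intros t Ht.
  assert (Hh : t - m <> 0) by lra.
  assert (Hh2 : Rabs (t - m) < d) by (apply Rabs_def1; lra).
  specialize (Hd' (t - m) Hh Hh2). replace (m + (t - m)) with t in Hd' by ring.
  apply Rabs_def2 in Hd'.
  set (q := (g t - g m) / (t - m)) in Hd'.
  assert (Hq : g t - g m = q * (t - m)) by (unfold q; field; lra).
  assert (0 < q) by lra. nra.
Qed.

Lemma RC_pow2 f a : RC f a -> RC (fun t => f t ^ 2) a.
Proof. intros H. apply (RC_ext _ (fun t => f t * f t)). intros; ring. apply RC_mult; auto. Qed.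

Lemma inI_le b t y : 0 <= t -> t <= y -> in_I0b b y -> in_I0b b t.
Proof. intros H1 H2 [H3 H4]. split. auto. apply Rbar_le_lt_trans with y; [exact H2 | exact H4]. Qed.

Theorem lemma2p9 (n : nat) (hn : (2 <= n)%nat) (b : Rbar) (hb : Rbar_lt 0 b)
  (u du ddu : R -> R) :
  is_solution n b u du ddu ->
  u 0 < sqrt (2 * (INR n - 1)) ->
  du 0 = 0 ->
  strictly_convex_on_I0b b u.
Proof.
  intros [Hu [Hdu Heq]] Hu0 Hdu0.
  remember (2 * (INR n - 1)) as r2 eqn:Hr2def.
  assert (Hr2 : 2 <= r2). { apply le_INR in hn. simpl in hn. rewrite Hr2def. lra. }
  assert (I0 : in_I0b b 0) by (split; [lra | exact hb]).
  assert (Hupos : forall x, in_I0b b x -> 0 < u x) by (intros x Hx; apply (Heq x Hx)).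
  assert (Hddu : forall x, in_I0b b x -> ddu x = (1 + du x ^ 2) * Phi_ r2 u du x / (2 * u x)).
  { intros x Hx. destruct (Heq x Hx) as [Hp He].
    assert (HA : 0 < 1 + du x ^ 2) by nra.
    assert (E : ddu x = (ddu x / (1 + du x ^ 2)) * (1 + du x ^ 2)) by (field; lra).
    rewrite E, He. unfold Phi_. rewrite Hr2def. field. lra. }
  assert (Hu0sq : u 0 ^ 2 < r2).
  { pose proof (sqrt_sqrt r2 ltac:(lra)). pose proof (Hupos 0 I0). nra. }
  assert (Hlt : forall x, 0 < x -> Rbar_lt x b -> in_I0b b x) by (intros; split; [lra | auto]).
  assert (Du : forall x, 0 < x -> Rbar_lt x b -> is_derive u x (du x)).
  { intros; eapply interior_derive; eauto. }
  assert (Ddu : forall x, 0 < x -> Rbar_lt x b -> is_derive du x (ddu x)).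
  { intros; eapply interior_derive; eauto. }
  set (Pv := Phi_ r2 u du) in *. set (Sv := Psi_ r2 u du) in *.
  assert (DP : forall x, 0 < x -> Rbar_lt x b -> is_derive Pv x (Sv x)).
  { intros x H1 H2. exact (dPhi r2 u du ddu x (Du x H1 H2) (Ddu x H1 H2) (Hddu x (Hlt x H1 H2)) (Rgt_not_eq _ _ (Hupos x (Hlt x H1 H2)))). }
  assert (DS : forall x, 0 < x -> Rbar_lt x b -> is_derive Sv x
      (x * du x * ddu x * (2 + Pv x) + x * (1 + du x ^ 2) * Sv x / 2)).
  { intros x H1 H2. exact (dPsi r2 u du ddu x (Du x H1 H2) (Ddu x H1 H2) (Hddu x (Hlt x H1 H2)) (Rgt_not_eq _ _ (Hupos x (Hlt x H1 H2)))). }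
  assert (RCu : RC u 0) by (eapply RC_at0; eauto).
  assert (RCdu : RC du 0) by (eapply RC_at0; eauto).
  assert (RCP : RC Pv 0).
  { unfold Pv, Phi_. apply RC_plus. apply RC_minus. apply RC_const. apply RC_pow2; auto.
    apply RC_mult. apply RC_mult. apply RC_id. auto. auto. }
  assert (RCS : RC Sv 0).
  { unfold Sv, Psi_. apply RC_plus. apply RC_minus. apply RC_mult. apply RC_id. apply RC_pow2; auto.
    apply RC_mult; auto. unfold Rdiv. apply RC_mult. apply RC_mult. apply RC_mult. apply RC_id.
    apply RC_plus. apply RC_const. apply RC_pow2; auto. exact RCP. apply RC_const. }
  assert (P0 : 0 < Pv 0). { unfold Pv, Phi_. lra. }
  assert (S0 : Sv 0 = 0). { unfold Sv, Psi_. rewrite Hdu0. unfold Rdiv. rewrite !Rmult_0_l, Rmult_0_r. lra. }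
  clearbody Pv Sv.
  assert (RCdu_s : forall s, in_I0b b s -> RC du s).
  { intros s [Hs Hsb]. destruct (Req_dec s 0) as [-> | Hne]. auto.
    eapply RC_of_derive. apply Ddu; auto. lra. }
  assert (RCu_s : forall s, in_I0b b s -> RC u s).
  { intros s [Hs Hsb]. destruct (Req_dec s 0) as [-> | Hne]. auto.
    eapply RC_of_derive. apply Du; auto. lra. }
  assert (Pos : forall y, in_I0b b y -> 0 < Pv y).
  { intros y Hy. destruct (Rlt_or_le 0 (Pv y)) as [Hp | Hneg]; auto. exfalso.
    assert (Hy0 : 0 < y).
    { destruct Hy as [Hy0 _]. destruct (Req_dec y 0) as [-> | Hne]. lra. lra. }
    destruct (first_fail Pv y Hy0 RCP) as [z [Hz [Hpz Hpos]]]; auto.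
    { intros t Ht. apply (D_cont _ _ (Sv t)). apply DP. lra. apply (inI_le b t y); auto; lra. }
    assert (Hzb : in_I0b b z) by (apply (inI_le b z y); auto; lra).
    assert (Hddpos : forall t, 0 <= t < z -> 0 < ddu t).
    { intros t Ht. assert (Htb : in_I0b b t) by (apply (inI_le b t z); auto; lra).
      rewrite (Hddu t Htb). pose proof (Hpos t Ht). pose proof (Hupos t Htb).
      apply Rdiv_lt_0_compat; [apply Rmult_lt_0_compat; [pose proof (pow2_ge_0 (du t)); lra | lra] | lra]. }
    assert (Hpmono : forall s t, 0 <= s < t -> t < z -> du s < du t).
    { intros s t Hst Htz.
      destruct (mvt du ddu s t) as [xi [Hxi Hm]]. lra.
      apply RCdu_s. apply (inI_le b s z); auto; lra.
      intros x Hx. apply Ddu. lra. apply (inI_le b x z); auto; lra.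
      pose proof (Hddpos xi ltac:(lra)). nra. }
    assert (Hppos : forall t, 0 < t < z -> 0 < du t).
    { intros t Ht. rewrite <- Hdu0. apply Hpmono; lra. }
    assert (HS : forall w, 0 < w < z -> 0 <= Sv w).
    { intros w Hw. destruct (Rle_or_lt 0 (Sv w)) as [H | HSw]; auto. exfalso.
      assert (Hwb : in_I0b b w) by (apply (inI_le b w z); auto; lra).
      set (K := w * (1 + du w ^ 2) / 2 + 1).
      set (G := fun t => Sv t * exp (-(K * t))).
      assert (Cexp : forall x, continuity_pt (fun t => exp (-(K*t))) x).
      { intros. apply (D_cont _ x (-K * exp (-(K*x)))). auto_derive. exact I. ring. }
      assert (RCG : RC G 0). { unfold G. apply RC_mult. auto. apply RC_cont. auto. }
      assert (DG : forall t, 0 < t -> Rbar_lt t b -> is_derive G t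
         ((t * du t * ddu t * (2 + Pv t) + t * (1 + du t ^ 2) * Sv t / 2) * exp (-(K*t))
           - Sv t * K * exp (-(K*t)))).
      { intros t H1 H2. pose proof (DS t H1 H2) as HD. unfold G. auto_derive.
        repeat split; eexists; eauto.
        replace (Derive (fun x0 => Sv x0) t) with
          (t * du t * ddu t * (2 + Pv t) + t * (1 + du t ^ 2) * Sv t / 2)
          by (symmetry; apply is_derive_unique; auto).
        field. }
      destruct RCG as [h [Hhc Hhe]].
      destruct (continuity_ab_min h 0 w) as [m [Hmin Hm]]. lra.
      { intros c Hc. destruct (Req_dec c 0) as [-> | Hne]. auto.
        assert (Hcb : in_I0b b c) by (apply (inI_le b c w); auto; lra).
        eapply D_cont. apply (ext_derive G h 0 c); auto. lra. apply DG. lra. apply Hcb. }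
      assert (Hew : 0 < exp (-(K * w))) by apply exp_pos.
      assert (Hhw : h w < 0). { rewrite Hhe by lra. unfold G. nra. }
      assert (Hh0 : h 0 = 0). { rewrite Hhe by lra. unfold G. rewrite S0. ring. }
      pose proof (Hmin w ltac:(lra)) as Hmw.
      assert (Hm0 : 0 < m). { destruct (Req_dec m 0) as [-> | Hne]. lra. lra. }
      assert (Hmb : in_I0b b m) by (apply (inI_le b m w); auto; lra).
      assert (Hem : 0 < exp (-(K * m))) by apply exp_pos.
      assert (HSm : Sv m < 0).
      { assert (G m < 0) by (rewrite <- Hhe by lra; lra). unfold G in H. nra. }
      set (l := (m * du m * ddu m * (2 + Pv m) + m * (1 + du m ^ 2) * Sv m / 2) * exp (-(K*m))
           - Sv m * K * exp (-(K*m))).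
      assert (Hl : 0 < l).
      { unfold l.
        assert (T1 : 0 <= m * du m * ddu m * (2 + Pv m)).
        { pose proof (Hppos m ltac:(lra)). pose proof (Hddpos m ltac:(lra)).
          pose proof (Hpos m ltac:(lra)).
          apply Rmult_le_pos. apply Rmult_le_pos. apply Rmult_le_pos. lra. lra. lra. lra. }
        assert (Hdm : du m <= du w).
        { destruct (Req_dec m w) as [-> | Hne]. lra. left. apply Hpmono; lra. }
        assert (Hdm0 : 0 < du m) by (apply Hppos; lra).
        assert (Hsq : du m ^ 2 <= du w ^ 2) by nra.
        assert (Hc1 : m * (1 + du m ^ 2) / 2 - K <= -1).
        { unfold K. assert (0 <= du w ^ 2) by nra. nra. }
        clearbody K G l.
        assert (Hc2 : 0 < Sv m * (m * (1 + du m ^ 2) / 2 - K)) by nra.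
        replace ((m * du m * ddu m * (2 + Pv m) + m * (1 + du m ^ 2) * Sv m / 2) * exp (-(K * m))
           - Sv m * K * exp (-(K * m))) with
          ((m * du m * ddu m * (2 + Pv m) + Sv m * (m * (1 + du m ^ 2) / 2 - K)) * exp (-(K * m)))
          by field.
        apply Rmult_lt_0_compat; lra. }
      destruct (deriv_pos_left G m l (DG m Hm0 (proj2 Hmb)) Hl) as [d [Hd Hdl]].
      set (t := Rmax (m - d/2) (m/2)).
      assert (Ht1 : m - d/2 <= t) by apply Rmax_l.
      assert (Ht2 : m/2 <= t) by apply Rmax_r.
      assert (Ht3 : t < m) by (unfold t; apply Rmax_lub_lt; lra).
      pose proof (Hdl t ltac:(lra)).
      pose proof (Hmin t ltac:(lra)).
      rewrite !Hhe in H0 by lra. lra. }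
    destruct (mvt Pv Sv 0 z) as [xi [Hxi Hm]]. lra. auto.
    intros x Hx. apply DP. lra. apply (inI_le b x z); auto; lra.
    pose proof (HS xi Hxi). nra. }
  assert (Hddpos : forall t, in_I0b b t -> 0 < ddu t).
  { intros t Ht. rewrite (Hddu t Ht). pose proof (Pos t Ht). pose proof (Hupos t Ht).
    apply Rdiv_lt_0_compat; [apply Rmult_lt_0_compat; [pose proof (pow2_ge_0 (du t)); lra | lra] | lra]. }
  assert (Hpmono : forall s t, 0 <= s < t -> Rbar_lt t b -> du s < du t).
  { intros s t Hst Htb. assert (Ht : in_I0b b t) by (split; [lra | auto]).
    destruct (mvt du ddu s t) as [xi [Hxi Hm]]. lra.
    apply RCdu_s. apply (inI_le b s t); auto; lra.
    intros x Hx. apply Ddu. lra. apply (inI_le b x t); auto; lra.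
    pose proof (Hddpos xi ltac:(apply (inI_le b xi t); auto; lra)). nra. }
  intros x y t Hx Hy Hxy Ht.
  set (z := t * x + (1 - t) * y).
  assert (Hxz : x < z) by (unfold z; nra).
  assert (Hzy : z < y) by (unfold z; nra).
  assert (Hz : in_I0b b z) by (apply (inI_le b z y); auto; destruct Hx; lra).
  destruct (mvt u du x z) as [x1 [Hx1 Hm1]]. lra. apply RCu_s; auto.
  { intros s Hs. apply Du. destruct Hx; lra. apply (inI_le b s z); auto; destruct Hx; lra. }
  destruct (mvt u du z y) as [x2 [Hx2 Hm2]]. lra. apply RCu_s; auto.
  { intros s Hs. apply Du. destruct Hx; lra. apply (inI_le b s y); auto; destruct Hx; lra. }
  assert (Hd1 : du x1 < du z) by (apply Hpmono; [destruct Hx; lra | apply Hz]).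
  assert (Hd2 : du z < du x2) by (apply Hpmono; [destruct Hx; lra | apply (proj2 (inI_le b x2 y ltac:(destruct Hx; lra) ltac:(lra) Hy))]).
  assert (E1 : z - x = (1 - t) * (y - x)) by (unfold z; ring).
  assert (E2 : y - z = t * (y - x)) by (unfold z; ring).
  assert (I1 : u z - u x < du z * (z - x)) by (rewrite Hm1; nra).
  assert (I2 : du z * (y - z) < u y - u z) by (rewrite Hm2; nra).
  assert (I3 : t * (u z - u x) < t * (du z * (z - x))) by nra.
  assert (I4 : (1 - t) * (du z * (y - z)) < (1 - t) * (u y - u z)) by nra.
  assert (E3 : t * (du z * (z - x)) = (1 - t) * (du z * (y - z))) by (rewrite E1, E2; ring).
  lra.
Qed.
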